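(* There is a function $f(\Delta)=O(\Delta^{4/3})$ (as $\Delta\to\infty$) such that every graph $G$ with maximum degree $\Delta\ge 3$ satisfies $\pi'_l(G)\le \Delta^2 + 2^{4/3}\Delta^{5/3} + f(\Delta)$.
   Context: An edge-coloring is non-repetitive if for every path with an even number $2j$ of edges $e_1,\dots,e_{2j}$ (in order along the path), the color sequence $(c(e_1),\dots,c(e_j))$ differs from $(c(e_{j+1}),\dots,c(e_{2j}))$. $\pi'_l(G)$, the Thue choice index, is the minimum $k$ such that for every assignment of lists of size at least $k$ to the edges, $G$ has a non-repetitive edge-coloring in which every edge receives a color from its list. *)

(* Defs.v *)
From mathcomp Require Import all_boot.
From Stdlib Require Import Reals.

Set Implicit Arguments.
Unset Strict Implicit.
Unset Printing Implicit Defensive.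

Definition simple_graph (T : finType) (e : rel T) : Prop :=
  symmetric e /\ irreflexive e.

Definition maxdeg (T : finType) (e : rel T) : nat :=
  \max_(x : T) #|[set y | e x y]|.

(* Edges are represented as the 2-element vertex sets {x,y} with e x y. *)
Definition is_edge (T : finType) (e : rel T) (E : {set T}) : Prop :=
  exists x y, e x y /\ E = [set x; y].

Definition path_colors (T : finType) (c : {set T} -> nat) (x : T) (s : seq T)
  : seq nat := pairmap (fun u v => c [set u; v]) x s.

Definition nonrepetitive (T : finType) (e : rel T) (c : {set T} -> nat) : Prop :=
  forall (x : T) (s : seq T) (j : nat),
    path e x s -> uniq (x :: s) -> size s = (2 * j)%N -> (0 < j)%N ->
    take j (path_colors c x s) != drop j (path_colors c x s).

Definition thue_edge_choosable (T : finType) (e : rel T) (k : nat) : Prop :=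
  forall L : {set T} -> seq nat,
    (forall E, is_edge e E -> (k <= size (undup (L E)))%N) ->
    exists c : {set T} -> nat,
      (forall E, is_edge e E -> c E \in L E) /\ nonrepetitive e c.

(* pi'_l(G) <= b, i.e. the minimum k for which G is Thue k-choosable is <= b,
   unfolded as: some such k is <= b. *)
Definition thue_choice_index_le (T : finType) (e : rel T) (b : R) : Prop :=
  exists k : nat, thue_edge_choosable e k /\ (INR k <= b)%R.

Definition bigO_4_3 (f : nat -> R) : Prop :=
  exists (C : R) (N : nat), forall D : nat, (N <= D)%N ->
    (Rabs (f D) <= C * Rpower (INR D) (4/3))%R.

(* Main.v *)
Require Import Defs.
From mathcomp Require Import all_boot.
From Stdlib Require Import Reals.
From Stdlib Require Import ClassicalEpsilon Lra Psatz.
From mathcomp Require Import zify ssrnat.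

Set Implicit Arguments.
Unset Strict Implicit.
Unset Printing Implicit Defensive.


Definition asb (P : Prop) : bool :=
  if excluded_middle_informative P then true else false.
Lemma asbP P : reflect P (asb P).
Proof. by rewrite /asb; case: excluded_middle_informative => h; constructor. Qed.

Lemma size_flatten_le (A : eqType) (B : Type) (f : A -> seq B) (s : seq A) m :
  (forall x, x \in s -> size (f x) <= m) -> size (flatten (map f s)) <= size s * m.
Proof.
elim: s => //= x s IH H.
rewrite size_cat mulSn leq_add ?H ?inE ?eqxx //.
by apply: IH => y ys; apply: H; rewrite inE ys orbT.
Qed.

Lemma revcons (T : Type) (a : T) s1 :
  rev (a :: s1) = last a s1 :: behead (rev (a :: s1)).
Proof. by rewrite lastI rev_rcons. Qed.

Section G.
Variables (T : finType) (e : rel T).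
Hypotheses (esym : symmetric e) (eirr : irreflexive e).

Definition edg (u v : T) : {set T} := [set u; v].
Definition pe (x : T) (s : seq T) := pairmap edg x s.

Lemma edgC u v : edg u v = edg v u.
Proof. by rewrite /edg setUC. Qed.

Lemma pc_pe (c : {set T} -> nat) x s : path_colors c x s = map c (pe x s).
Proof. by elim: s x => //= y s IH x; rewrite IH. Qed.

Lemma size_pe x s : size (pe x s) = size s.
Proof. exact: size_pairmap. Qed.

Lemma pe_rev x s : pe (last x s) (rev (belast x s)) = rev (pe x s).
Proof.
elim: s x => //= y s IH x.
rewrite rev_cons /pe -cats1 pairmap_cat /= -/(pe _ _) IH.
rewrite rev_cons -cats1; congr (_ ++ [:: _]).
have -> : last (last y s) (rev (belast y s)) = y.
  by case: s {IH} => //= z s; rewrite rev_cons last_rcons.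
exact: edgC.
Qed.

Lemma pe_vert x s F z : F \in pe x s -> z \in F -> z \in x :: s.
Proof.
elim: s x => //= y s IH x; rewrite inE => /orP [/eqP -> | H].
  by rewrite /edg !inE => /orP [-> | ->] //; rewrite orbT.
by move=> /(IH _ H); rewrite !inE => ->; rewrite orbT.
Qed.

Lemma pe_edge x s F : path e x s -> F \in pe x s -> is_edge e F.
Proof.
elim: s x => //= y s IH x /andP [exy p]; rewrite inE => /orP [/eqP -> | H].
  by exists x, y.
exact: IH p H.
Qed.

Lemma uniq_pe x s : uniq (x :: s) -> uniq (pe x s).
Proof.
elim: s x => //= y s IH x /andP [xn u]; rewrite IH // andbT.
apply/negP => H; have := pe_vert H (z := x); rewrite /edg !inE eqxx => /(_ isT).
by move=> Hx; move: xn; rewrite inE Hx.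
Qed.

Definition nb x := enum [set y | e x y].
Fixpoint walks n x : seq (seq T) :=
  if n is n'.+1 then flatten [seq [seq y :: w | w <- walks n' y] | y <- nb x]
  else [:: [::]].

Lemma walksP s x : path e x s -> s \in walks (size s) x.
Proof.
elim: s x => [|y s IH] x /=; first by rewrite inE.
move=> /andP [exy p]; apply/flattenP; exists [seq y :: w | w <- walks (size s) y].
  by apply/mapP; exists y => //; rewrite mem_enum inE.
by rewrite mem_map ?IH //; move=> a b [].
Qed.

Lemma size_nb x : size (nb x) <= maxdeg e.
Proof. rewrite /nb -cardE /maxdeg; exact: (@leq_bigmax _ (fun x => #|[set y | e x y]|) x). Qed.

Lemma size_walks n x : size (walks n x) <= maxdeg e ^ n.
Proof.
elim: n x => [|n IH] x //=.
rewrite expnS; apply: leq_trans (size_flatten_le (m := maxdeg e ^ n) _) _.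
  by move=> y _; rewrite size_map IH.
by rewrite leq_mul2r size_nb orbT.
Qed.

Definition mk (a b : T) (s1 s2 : seq T) : T * seq T :=
  (last a s1, behead (rev (a :: s1)) ++ b :: s2).

Definition cand (u v : T) (j : nat) : seq (T * seq T) :=
  flatten [seq flatten [seq [seq mk ab.1 ab.2 s1 s2 | s1 <- walks p ab.1,
                                   s2 <- walks (2*j - p.+1) ab.2] | p <- iota 0 j]
          | ab <- [:: (u,v); (v,u)]].

Lemma size_cand u v j : size (cand u v j) <= 2 * (j * maxdeg e ^ (2*j).-1).
Proof.
apply: (size_flatten_le (m := j * maxdeg e ^ (2*j).-1)) => ab _.
rewrite -{3}(size_iota 0 j).
apply: (size_flatten_le (m := maxdeg e ^ (2*j).-1)) => p; rewrite mem_iota => /andP [_ pj].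
rewrite size_allpairs.
have -> : (2 * j).-1 = p + (2 * j - p.+1) by lia.
by rewrite expnD leq_mul ?size_walks.
Qed.

Lemma edg_eq a b u v : a != b -> edg a b = edg u v ->
  (a = u /\ b = v) \/ (a = v /\ b = u).
Proof.
move=> nab H.
have au : a \in edg u v by rewrite -H /edg !inE eqxx.
have bu : b \in edg u v by rewrite -H /edg !inE eqxx orbT.
move: au bu; rewrite /edg !inE => /orP [] /eqP ea /orP [] /eqP eb.
- by move: nab; rewrite ea eb eqxx.
- by left.
- by right.
- by move: nab; rewrite ea eb eqxx.
Qed.

Lemma candP u v j x s : path e x s -> size s = (2*j)%N ->
  edg u v \in take j (pe x s) -> (x, s) \in cand u v j.
Proof.
set E := edg u v => px sz H.
have szt : size (take j (pe x s)) = j by rewrite size_takel // size_pe sz; lia.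
have pj : index E (take j (pe x s)) < j by rewrite -{2}szt index_mem.
set p := index E _ in pj.
have Hn : nth E (pe x s) p = E by rewrite -(nth_take _ pj) nth_index.
have ps : p < size s by lia.
set b := nth x s p; set s2 := drop p.+1 s; set t := take p s.
have Hs : s = t ++ b :: s2 by rewrite -(drop_nth x ps) cat_take_drop.
have st : size t = p by rewrite size_takel //; lia.
set a := last x t.
have Hpe : pe x s = pe x t ++ edg a b :: pe b s2 by rewrite {1}Hs /pe pairmap_cat.
move: Hn; rewrite Hpe nth_cat size_pe st ltnn subnn /= => Hab.
have : path e x (t ++ b :: s2) by rewrite -Hs.
rewrite cat_path /= -/a => /and3P [pt eab ps2].
have nab : a != b by apply/eqP => ab; move: eab; rewrite ab eirr.
set s1 := rev (belast x t).
have ps1 : path e a s1.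
  rewrite /a /s1 rev_path.
  have -> : path (fun z => e^~ z) x t = path e x t by apply: eq_path => y z; exact: esym.
  exact: pt.
have s1w : s1 \in walks p a by rewrite -st -(size_belast x) -size_rev walksP.
have s2w : s2 \in walks (2 * j - p.+1) b.
  by have := walksP ps2; rewrite size_drop sz.
have Hmk : mk a b s1 s2 = (x, s).
  have Hr : rev (a :: s1) = x :: t.
    by rewrite rev_cons revK /a -lastI.
  move: (revcons a s1); rewrite Hr => [[Hx]].
  by rewrite /mk Hr /= -Hx -Hs.
apply/flattenP.
have Hin : forall ab : T * T, ab = (a, b) ->
    (x, s) \in flatten [seq [seq mk ab.1 ab.2 s1 s2 | s1 <- walks p ab.1,
                         s2 <- walks (2*j - p.+1) ab.2] | p <- iota 0 j].
  move=> ab ->; apply/flattenP; eexists.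
    by apply/mapP; exists p; [rewrite mem_iota; apply/andP; split; last exact: pj|].
  by rewrite -Hmk; apply: allpairs_f.
eexists; last by apply: (Hin (a, b) erefl).
apply/mapP; exists (a, b) => //.
by case: (edg_eq nab Hab) => [[-> ->] | [-> ->]]; rewrite !inE eqxx ?orbT.
Qed.
End G.

Fixpoint Tf (d b J : nat) : nat :=
  if J is J'.+1 then b * Tf d b J' + J * d ^ J' else 0.

Lemma Tf_id d a J :
  a ^ 2 * Tf d (d + a) J + J.+1 * d ^ J * (d + a) = (d + a) ^ J.+1 + J * d ^ J.+1.
Proof.
elim: J => [|J IH] /=; first by rewrite !expn0 !expn1; lia.
rewrite !expnS in IH *.
set P := d ^ J in IH *; set Q := (d + a) ^ J in IH *; set TT := Tf d (d + a) J in IH *.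
have H2 := congr1 (muln (d + a)) IH.
nia.
Qed.

Lemma Tf_le d a J : a ^ 2 * Tf d (d + a) J <= (d + a) ^ J.+1.
Proof.
have := Tf_id d a J; rewrite (expnS d J).
set P := d ^ J; set TT := Tf _ _ _; set Q := (d + a) ^ J.+1.
have : J * (d * P) <= J.+1 * P * (d + a) by nia.
lia.
Qed.

Lemma sum_bound (b D Y J : nat) (z : nat -> nat) :
  (forall j, 1 <= j <= J -> b ^ j.-1 * z j <= 2 * j * D ^ (2 * j).-1 * Y) ->
  b ^ J.-1 * \sum_(1 <= j < J.+1) z j <= 2 * D * Tf (D ^ 2) b J * Y.
Proof.
elim: J => [|J IH] H; first by rewrite big_geq.
rewrite big_nat_recr //= mulnDr.
have H1 : b ^ J * \sum_(1 <= j < J.+1) z j <= b * (2 * D * Tf (D ^ 2) b J * Y).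
  case: J IH H => [|J] IH H; first by rewrite big_geq.
  rewrite expnS -mulnA leq_mul2l IH ?orbT // => j /andP [j1 jJ].
  by apply: H; rewrite j1 /=; lia.
have H2 : b ^ J * z J.+1 <= 2 * J.+1 * D ^ (2 * J.+1).-1 * Y.
  by apply: (H J.+1); lia.
have E : D ^ (2 * J.+1).-1 = D * (D ^ 2) ^ J.
  by rewrite -expnM -expnS; congr (_ ^ _); lia.
rewrite E in H2.
nia.
Qed.


Lemma card_bigcup_seq (I : eqType) (U : finType) (r : seq I) (F : I -> {set U}) :
  #|\big[@setU U/set0]_(i <- r) F i| <= \sum_(i <- r) #|F i|.
Proof.
elim: r => [|i r IH]; first by rewrite !big_nil cards0.
rewrite !big_cons; apply: leq_trans (leq_card_setU _ _) _.
by rewrite leq_add2l.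
Qed.

Lemma mem_bigcup_seq (I : eqType) (U : finType) (r : seq I) (F : I -> {set U}) i x :
  i \in r -> x \in F i -> x \in \big[@setU U/set0]_(i <- r) F i.
Proof.
elim: r => [|k r IH] //; rewrite inE big_cons in_setU => /orP [/eqP <- -> //| ir xF].
by rewrite IH ?orbT.
Qed.

Lemma sum_le_size (I : Type) (r : seq I) (f : I -> nat) Y :
  (forall i, f i <= Y) -> \sum_(i <- r) f i <= size r * Y.
Proof.
move=> H; elim: r => [|i r IH]; first by rewrite big_nil.
by rewrite big_cons mulSn leq_add.
Qed.

Section Col.
Variables (T : finType) (e : rel T).
Hypotheses (esym : symmetric e) (eirr : irreflexive e).
Variables (L : {set T} -> seq nat) (kk : nat).
Hypothesis hL : forall F, is_edge e F -> kk.+1 <= size (undup (L F)).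

Definition col (phi : {ffun {set T} -> 'I_kk.+1}) F := nth 0 (undup (L F)) (phi F).
Definition cols phi x s := map (col phi) (pe x s).

Definition good (S : {set {set T}}) phi : Prop :=
  forall x s j, path e x s -> uniq (x :: s) -> size s = (2 * j)%N -> 0 < j ->
    all (fun F => F \in S) (pe x s) -> take j (cols phi x s) != drop j (cols phi x s).

Lemma good_trans (S S0 : {set {set T}}) (phi psi : {ffun {set T} -> 'I_kk.+1}) : good S phi -> S0 \subset S ->
  (forall F, F \in S0 -> phi F = psi F) -> good S0 psi.
Proof.
move=> g sub ag x s j p u sz j0 al.
have -> : cols psi x s = cols phi x s.
  apply/eq_in_map => F Fin; rewrite /col ag //.
  by move/allP: al => /(_ F Fin).
apply: g => //; apply/allP => F Fin; move/allP: al => /(_ F Fin).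
by move/(subsetP sub).
Qed.

Lemma col_inj F (i1 i2 : 'I_kk.+1) : is_edge e F ->
  nth 0 (undup (L F)) i1 = nth 0 (undup (L F)) i2 -> i1 = i2.
Proof.
move=> eF /eqP; rewrite nth_uniq ?undup_uniq //.
- by move/eqP; apply: val_inj.
- by apply: leq_trans (hL eF).
- by apply: leq_trans (hL eF).
Qed.

Definition supp (S : {set {set T}}) (phi : {ffun {set T} -> 'I_kk.+1}) :=
  [forall F, (F \notin S) ==> (phi F == ord0)].

Definition C S := [set phi : {ffun {set T} -> 'I_kk.+1} | supp S phi && asb (good S phi)].


Section KL.
Variables (a K : nat) (S' : {set {set T}}) (u v : T).
Hypotheses (euv : e u v) (ES : edg u v \notin S') (a0 : 0 < a).
Local Notation D := (maxdeg e).
Local Notation b := (maxdeg e ^ 2 + a).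
Hypotheses (hK : 2 * D * b ^ 2 <= K * a ^ 2) (hk : b + K <= kk.+1).
Hypothesis IH : forall X : {set {set T}}, X \subset S' -> b ^ #|X| * #|C (S' :\: X)| <= #|C S'|.

Local Notation E := (edg u v).
Local Notation S1 := (E |: S').

Definition A := [set phi | supp S1 phi && asb (good S' phi)].
Definition upd (psi : {ffun {set T} -> 'I_kk.+1}) i :=
  [ffun F => if F == E then i else psi F].

Lemma step1 : kk.+1 * #|C S'| <= #|A|.
Proof.
have inj : {in setX (C S') [set: 'I_kk.+1] &, injective (fun p => upd p.1 p.2)}.
  move=> [p1 i1] [p2 i2]; rewrite !inE /= => /andP [/andP [s1 _] _] /andP [/andP [s2 _] _] H.
  have Ei : i1 = i2 by have := congr1 (fun f : {ffun {set T} -> 'I_kk.+1} => f E) H; rewrite !ffunE eqxx.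
  congr pair => //; apply/ffunP => F.
  case: (F =P E) => [-> | nFE].
    move/forallP: s1 => /(_ E); rewrite ES /= => /eqP ->.
    by move/forallP: s2 => /(_ E); rewrite ES /= => /eqP ->.
  by have := congr1 (fun f : {ffun {set T} -> 'I_kk.+1} => f F) H; rewrite !ffunE (introF eqP nFE).
have := card_in_imset inj; rewrite cardsX cardsT card_ord => Hc.
rewrite mulnC -Hc.
apply: subset_leq_card; apply/subsetP => phi /imsetP [[psi i]].
rewrite !inE /= => /andP [/andP [sp gp] _] ->.
apply/andP; split.
  apply/forallP => F; apply/implyP; rewrite !inE negb_or => /andP [nFE nFS].
  by rewrite ffunE (negbTE nFE); move/forallP: sp => /(_ F); rewrite nFS.
apply/asbP; move/asbP: gp => gp; apply: (good_trans gp (subxx S')) => F FS.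
have nFE : F != E by apply: contraNneq ES => <-.
by rewrite ffunE (negbTE nFE).
Qed.

Local Notation B := [set phi : {ffun {set T} -> 'I_kk.+1} | asb (good S1 phi)].

Lemma step2 : #|A| = #|C S1| + #|A :\: B|.
Proof.
rewrite -(cardsID B A); congr (_ + _); apply: eq_card => phi.
rewrite !inE; apply/idP/idP.
  by move=> /andP [/andP [-> _] ->].
move=> /andP [-> g]; rewrite g andbT /=; apply/asbP; move/asbP: g => g.
by apply: (good_trans g (subsetUr _ _)).
Qed.

Definition cond j (V : T * seq T) :=
  [&& E \in take j (pe V.1 V.2), all (fun F => F \in S1) (pe V.1 V.2),
      uniq (V.1 :: V.2), path e V.1 V.2 & size V.2 == 2 * j].

Definition Bset j V := [set phi in A | cond j V &&
  (take j (cols phi V.1 V.2) == drop j (cols phi V.1 V.2))].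

Lemma Bset_bound j V : 0 < j -> b ^ j.-1 * #|Bset j V| <= #|C S'|.
Proof.
move=> j0.
case cnd : (cond j V); last first.
  have -> : Bset j V = set0 by apply/setP => phi; rewrite !inE cnd /= andbF.
  by rewrite cards0 muln0.
case: V cnd => x s cnd; move: (cnd) => /and5P [/= Eh al un px /eqP sz].
set X := [set F in take j (pe x s)] :\ E.
have uq : uniq (pe x s) := uniq_pe un.
have spe : size (pe x s) = 2 * j by rewrite size_pe.
have cX : #|X| = j.-1.
  have := cardsD1 E [set F in take j (pe x s)].
  have szt : size (take j (pe x s)) = j by rewrite size_takel //; lia.
  rewrite cardsE inE Eh (card_uniqP _) ?take_uniq // szt.
  rewrite -/X; lia.
have XS : X \subset S'.
  apply/subsetP => F; rewrite !inE => /andP [nFE Ft].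
  have : F \in pe x s by rewrite -(cat_take_drop j (pe x s)) mem_cat Ft.
  by move/(allP al); rewrite !inE (negbTE nFE).
pose r := fun phi : {ffun {set T} -> 'I_kk.+1} =>
  [ffun F => if F \in S' :\: X then phi F else ord0].
have rin : forall phi, phi \in Bset j (x, s) -> r phi \in C (S' :\: X).
  move=> phi; rewrite !inE => /andP [/andP [_ g] _].
  apply/andP; split.
    by apply/forallP => F; apply/implyP => /negbTE nF; rewrite ffunE nF.
  apply/asbP; move/asbP: g => g; apply: (good_trans g (subsetDl S' X)) => F FS.
  by rewrite ffunE FS.
have rinj : {in Bset j (x, s) &, injective r}.
  move=> p1 p2; rewrite !inE /= => /andP [/andP [s1 _] /andP [_ /eqP td1]]
    /andP [/andP [s2 _] /andP [_ /eqP td2]] Hr.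
  apply/ffunP => F.
  case FS : (F \in S' :\: X).
    by have := congr1 (fun f : {ffun {set T} -> 'I_kk.+1} => f F) Hr; rewrite !ffunE FS.
  case F1 : (F \in S1); last first.
    move/forallP: s1 => /(_ F); rewrite F1 /= => /eqP ->.
    by move/forallP: s2 => /(_ F); rewrite F1 /= => /eqP ->.
  have FH : F \in take j (pe x s).
    case: (F =P E) => [-> // | nFE].
    move: F1; rewrite !inE (introF eqP nFE) /= => FS'.
    move: FS; rewrite in_setD FS' andbT => /negbFE.
    by rewrite in_setD1 => /andP [_]; rewrite inE.
  have szt : size (take j (pe x s)) = j by rewrite size_takel // spe leq_pmull.
  have [i ij HF] : exists2 i, i < j & nth F (pe x s) i = F.
    exists (index F (take j (pe x s))); first by rewrite -{2}szt index_mem.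
    by rewrite -(nth_take _ (_ : _ < j)) ?nth_index // -{2}szt index_mem.
  have jip : j + i < size (pe x s) by rewrite spe mul2n -addnn ltn_add2l.
  have ip : i < size (pe x s) by apply: leq_trans jip; rewrite ltnS leq_addl.
  set G := nth F (pe x s) (j + i).
  have cF : forall p : {ffun {set T} -> 'I_kk.+1},
      take j (cols p x s) = drop j (cols p x s) -> col p F = col p G.
    move=> p td; have := congr1 (fun l => nth 0 l i) td.
    by rewrite nth_take // nth_drop /cols !(nth_map F) ?HF.
  have GS : G \in S' :\: X.
    have Gd : G \in drop j (pe x s).
      have -> : G = nth F (drop j (pe x s)) i by rewrite nth_drop.
      by apply: mem_nth; rewrite size_drop spe mul2n -addnn addnK.
    have Gp : G \in pe x s by rewrite -(cat_take_drop j (pe x s)) mem_cat Gd orbT.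
    have nGt : G \notin take j (pe x s).
      move: uq; rewrite -{1}(cat_take_drop j (pe x s)) cat_uniq => /and3P [_ /hasPn hn _].
      by apply/negP => Gt; move: (hn G Gd); rewrite Gt.
    have nGE : G != E by apply: contraNneq nGt => ->.
    move: (allP al G Gp); rewrite !inE (negbTE nGE) /= => ->.
    by rewrite (negbTE nGt) /= ?andbF ?andbT.
  have pG := congr1 (fun f : {ffun {set T} -> 'I_kk.+1} => f G) Hr; rewrite /= !ffunE GS in pG.
  apply: (col_inj (F := F)).
    by apply: (pe_edge px); rewrite -(cat_take_drop j (pe x s)) mem_cat FH.
  by move: (cF _ td1) (cF _ td2); rewrite /col pG => -> ->.
have H1 := IH XS; rewrite cX in H1.
apply: leq_trans H1; rewrite leq_mul2l; apply/orP; right.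
rewrite -(card_in_imset rinj); apply: subset_leq_card.
by apply/subsetP => _ /imsetP [phi Hphi ->]; exact: rin.
Qed.


Local Notation J := #|T|.

Lemma rev_vert (x : T) s : last x s :: rev (belast x s) = rev (x :: s).
Proof. by rewrite [x :: s]lastI rev_rcons. Qed.

Lemma Bad_sub : A :\: B \subset
  \big[@setU _/set0]_(j <- index_iota 1 J.+1)
     \big[@setU _/set0]_(V <- cand e u v j) Bset j V.
Proof.
apply/subsetP => phi; rewrite in_setD => /andP [ng inA].
move: ng; rewrite inE => ng.
apply/negPn/negP => /negP nin; move/negP: ng; apply; apply/asbP.
move=> x s j px un sz j0 al; apply/negP => /eqP td.
have gS' : good S' phi by move: inA; rewrite inE => /andP [_ /asbP].
have spe : size (pe x s) = 2 * j by rewrite size_pe.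
have EP : E \in pe x s.
  apply/negPn/negP => nE.
  have al' : all (fun F => F \in S') (pe x s).
    apply/allP => F Fin; move: (allP al F Fin); rewrite !inE => /orP [/eqP FE|//].
    by move: nE; rewrite -FE Fin.
  by move: (gS' x s j px un sz j0 al'); rewrite td eqxx.
have jJ : j <= J.
  have := max_card (mem (x :: s)); rewrite (card_uniqP un) /= sz.
  by move=> h; apply: leq_trans h; rewrite mul2n -addnn -addnS leq_addr.
have jr : j \in index_iota 1 J.+1 by rewrite mem_index_iota j0 ltnS jJ.
apply: nin; apply: (mem_bigcup_seq (i := j)) => //.
have szc : size (cols phi x s) = 2 * j by rewrite size_map.
case Et : (E \in take j (pe x s)).
  apply: (mem_bigcup_seq (i := (x, s))); first exact: candP.
  rewrite in_set inA /=; apply/andP; split; last by rewrite td.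
  by apply/and5P; split; [exact: Et | exact: al | exact: un | exact: px | rewrite /= sz].
have Ed : E \in drop j (pe x s).
  by move: EP; rewrite -{1}(cat_take_drop j (pe x s)) mem_cat Et.
have hsub : 2 * j - j = j by rewrite mul2n -addnn addnK.
have pe' : pe (last x s) (rev (belast x s)) = rev (pe x s) by apply: pe_rev.
have Et' : E \in take j (pe (last x s) (rev (belast x s))).
  by rewrite pe' take_rev spe hsub mem_rev.
have px' : path e (last x s) (rev (belast x s)).
  rewrite rev_path.
  have -> : path (fun z => e^~ z) x s = path e x s by apply: eq_path => y z; exact: esym.
  exact: px.
have sz' : size (rev (belast x s)) = 2 * j by rewrite size_rev size_belast.
apply: (mem_bigcup_seq (i := (last x s, rev (belast x s)))); first exact: candP.
rewrite in_set inA /=; apply/andP; split.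
  have un' : uniq (last x s :: rev (belast x s)) by rewrite rev_vert rev_uniq.
  apply/and5P; split; [exact: Et' | | exact: un' | exact: px' | by rewrite /= sz'].
  by rewrite /= pe' all_rev.
rewrite /cols pe' map_rev.
rewrite take_rev drop_rev size_map spe hsub.
by rewrite -/(cols phi x s) td.
Qed.

Lemma Bad_bound : #|A :\: B| <= K * #|C S'|.
Proof.
set Y := #|C S'|.
have J0 : 0 < J by apply/card_gt0P; exists u.
set z := fun j => \sum_(V <- cand e u v j) #|Bset j V|.
have h1 : #|A :\: B| <= \sum_(1 <= j < J.+1) z j.
  apply: leq_trans (subset_leq_card Bad_sub) _.
  apply: leq_trans (card_bigcup_seq _ _) _.
  by apply: leq_sum => j _; exact: card_bigcup_seq.
have h2 := @sum_bound b D Y J z.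
have h2' : b ^ J.-1 * \sum_(1 <= j < J.+1) z j <= 2 * D * Tf (D ^ 2) b J * Y.
  apply: h2 => j /andP [j1 jJ].
  rewrite /z big_distrr /=.
  apply: leq_trans (sum_le_size _ (Y := Y) _) _.
    by move=> V; apply: Bset_bound.
  by rewrite leq_mul2r (leq_trans (size_cand e u v j)) ?orbT // mulnA.
have h3 : 2 * D * Tf (D ^ 2) b J <= K * b ^ J.-1.
  have t1 := Tf_le (D ^ 2) a J.
  have eb : b ^ J.+1 = b ^ 2 * b ^ J.-1 by rewrite -expnD; congr (_ ^ _); clear -J0; lia.
  rewrite eb in t1.
  have a2 : 0 < a ^ 2 by rewrite expn_gt0 a0.
  rewrite -(leq_pmul2l a2).
  move: t1 hK; set t := Tf _ _ _; set B' := b ^ J.-1; set b2 := b ^ 2; set A2 := a ^ 2.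
  clear; nia.
have bJ : 0 < b ^ J.-1 by rewrite expn_gt0 addn_gt0 a0 orbT.
rewrite -(leq_pmul2l bJ).
apply: leq_trans (_ : b ^ J.-1 * \sum_(1 <= j < J.+1) z j <= _).
  by rewrite leq_mul2l h1 orbT.
apply: leq_trans h2' _.
by rewrite mulnA (mulnC (b ^ J.-1)) leq_mul2r h3 orbT.
Qed.

Lemma KL : b * #|C S'| <= #|C S1|.
Proof.
have s1 := step1; have s2 := step2; have s3 := Bad_bound.
have s4 : (b + K) * #|C S'| <= kk.+1 * #|C S'| by rewrite leq_mul2r hk orbT.
move: s1 s2 s3 s4; set Y := #|C S'|; set x1 := #|A|; set x2 := #|C S1|; set x3 := #|A :\: B|.
clear; nia.
Qed.

End KL.
End Col.



Section Main.
Variables (T : finType) (e : rel T).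
Hypotheses (esym : symmetric e) (eirr : irreflexive e).
Variables (L : {set T} -> seq nat) (kk a K : nat).
Hypothesis hL : forall F, is_edge e F -> kk.+1 <= size (undup (L F)).
Local Notation D := (maxdeg e).
Local Notation b := (maxdeg e ^ 2 + a).
Hypotheses (a0 : 0 < a) (hK : 2 * D * b ^ 2 <= K * a ^ 2) (hk : b + K <= kk.+1).

Definition Edges := [set F : {set T} | asb (is_edge e F)].

Lemma Qind n : forall S : {set {set T}}, #|S| = n -> S \subset Edges ->
  forall X : {set {set T}}, X \subset S -> b ^ #|X| * #|C e L kk (S :\: X)| <= #|C e L kk S|.
Proof.
elim: n => [|n IHn] S cS SE X XS.
  have S0 : S = set0 by apply/eqP; rewrite -cards_eq0 cS.
  have X0 : X = set0 by apply/eqP; rewrite -subset0 -S0.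
  by rewrite X0 cards0 expn0 mul1n setD0.
case: (set_0Vmem X) => [-> | [E EX]].
  by rewrite cards0 expn0 mul1n setD0.
have ES : E \in S by apply: (subsetP XS).
set S' := S :\ E.
have cS' : #|S'| = n by move: cS; rewrite (cardsD1 E S) ES add1n => [[]].
have S'E : S' \subset Edges by apply: subset_trans SE; apply: subsetDl.
have [u [v [euv Euv]]] : is_edge e E by move/(subsetP SE): ES; rewrite inE => /asbP.
have ES' : edg u v \notin S' by rewrite /edg -Euv /S' setD11.
have X'S : X :\ E \subset S'.
  apply/subsetP => F; rewrite !inE => /andP [-> FX] /=; exact: (subsetP XS).
have H1 := IHn S' cS' S'E (X :\ E) X'S.
have eqS : S' :\: (X :\ E) = S :\: X.
  apply/setP => F; rewrite !inE; case: (F =P E) => [-> | _] /=; first by rewrite EX.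
  by [].
rewrite eqS in H1.
have H2 := KL esym eirr hL euv ES' a0 hK hk (IHn S' cS' S'E).
have eS : edg u v |: S' = S by rewrite /edg -Euv /S' setD1K.
rewrite eS in H2.
have cX : #|X| = (#|X :\ E|).+1 by rewrite (cardsD1 E X) EX.
rewrite cX expnS -mulnA; apply: leq_trans H2; rewrite leq_mul2l H1 orbT //.
Qed.

Lemma exists_col : exists c : {set T} -> nat,
  (forall E, is_edge e E -> c E \in L E) /\ nonrepetitive e c.
Proof.
have := Qind (erefl #|Edges|) (subxx _) (subxx Edges); rewrite setDv.
have C0 : [ffun _ => ord0] \in C e L kk set0.
  rewrite inE; apply/andP; split.
    by apply/forallP => F; apply/implyP => _; rewrite ffunE.
  apply/asbP => x s j px un sz j0 al.
  case: s px un sz al => [|y s] //= px un sz; first by move: sz j0; case: j.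
  by rewrite inE.
have c0 : 0 < #|C e L kk set0| by apply/card_gt0P; exists [ffun _ => ord0].
move=> H.
have : 0 < #|C e L kk Edges|.
  apply: leq_trans H; rewrite muln_gt0 c0 andbT expn_gt0 addn_gt0 a0 orbT //.
case/card_gt0P => phi; rewrite inE => /andP [_ /asbP g].
exists (col L phi); split.
  move=> F eF; rewrite /col.
  have : nth 0 (undup (L F)) (phi F) \in undup (L F).
    by apply: mem_nth; apply: leq_trans (hL eF).
  by rewrite mem_undup.
move=> x s j px un sz j0; rewrite pc_pe.
apply: (g x s j px un sz j0).
apply/allP => F Fin; rewrite inE; apply/asbP; exact: (pe_edge px Fin).
Qed.
End Main.

Lemma choosable (T : finType) (e : rel T) (a K : nat) :
  simple_graph e -> 0 < a ->
  2 * maxdeg e * (maxdeg e ^ 2 + a) ^ 2 <= K * a ^ 2 ->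
  thue_edge_choosable e (maxdeg e ^ 2 + a + K).
Proof.
move=> [esym eirr] a0 hK L hL.
have kpos : 0 < maxdeg e ^ 2 + a + K by rewrite !addn_gt0 a0 orbT.
set kk := (maxdeg e ^ 2 + a + K).-1.
have ek : kk.+1 = maxdeg e ^ 2 + a + K by rewrite /kk prednK.
apply: (@exists_col T e esym eirr L kk a K) => //.
- by move=> F eF; rewrite ek; apply: hL.
- by rewrite ek.
Qed.


Fixpoint cb (n D : nat) : nat :=
  if n is n'.+1 then (if n ^ 3 <= D then n else cb n' D) else 0.

Lemma cb_le n D : cb n D ^ 3 <= D.
Proof. by elim: n => //= n IH; case: ifP. Qed.

Lemma cb_max n D m : m <= n -> m ^ 3 <= D -> m <= cb n D.
Proof.
elim: n => [|n IH] /=; first by rewrite leqn0 => /eqP ->.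
case: ifP => // h; rewrite leq_eqVlt => /orP [/eqP -> | mn]; first by rewrite h.
by move=> hm; apply: IH.
Qed.

Definition cbrt D := cb D D.

Lemma cbrt_gt D : D < (cbrt D).+1 ^ 3.
Proof.
rewrite ltnNge; apply/negP => h.
have h1 : (cbrt D).+1 <= D.
  apply: leq_trans h; rewrite -{1}(expn1 (cbrt D).+1) leq_pexp2l //.
have := cb_max h1 h; rewrite /cbrt ltnn //.
Qed.

Lemma cbrt_pos D : 0 < D -> 0 < cbrt D.
Proof. by move=> D0; apply: (cb_max (m := 1)). Qed.

Lemma pow_succ_le s n : 0 < s -> (s.+1) ^ n.+1 + s ^ n <= s ^ n.+1 + 2 ^ n.+1 * s ^ n.
Proof.
move=> s0; elim: n => [|n IH]; first by rewrite !expn0 !expn1; lia.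
rewrite (expnS s n) in IH; rewrite (expnS s.+1 n.+1) (expnS s n.+1) (expnS 2 n.+1) (expnS s n).
move: IH; set X := s ^ n; set Y := s.+1 ^ n.+1; set Z := 2 ^ n.+1.
have Z0 : 0 < Z by rewrite expn_gt0.
clearbody X Y Z; move=> IH.
have h4 := leq_mul (leqnn s.+1) IH.
have h3 : Z * X + s * X <= s * Z * X + X.
  case: s s0 {IH h4 Y} => // s' _; case: Z Z0 => // z' _; nia.
lia.
Qed.

Lemma poly_bound s D : 0 < s -> D < s.+1 ^ 3 ->
  4 * D * (D ^ 2 + 2 * s ^ 5) ^ 2 <= (2 * s ^ 5) ^ 2 * (s ^ 5 + 2 ^ 16 * s ^ 4).
Proof.
move=> s0 hD; have {}hD : D <= s.+1 ^ 3 by apply: ltnW.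
have q2 : s.+1 <= 2 * s by lia.
have h1 : D ^ 2 <= s.+1 ^ 6.
  by rewrite (_ : 6 = 3 * 2) // expnM leq_sqr.
have L1 : 4 * D * (D ^ 2 + 2 * s ^ 5) ^ 2 <=
          4 * s.+1 ^ 3 * (s.+1 ^ 6 + 2 * s ^ 5) ^ 2.
  apply: leq_mul; first by apply: leq_mul.
  by rewrite leq_sqr leq_add2r.
apply: leq_trans L1 _.
have f1 := pow_succ_le 14 s0.
have g2 : s ^ 5 * s.+1 ^ 9 <= 2 ^ 9 * s ^ 14.
  have : s.+1 ^ 9 <= (2 * s) ^ 9 by rewrite leq_exp2r.
  rewrite expnMn => h; apply: leq_trans (leq_mul (leqnn _) h) _.
  by rewrite mulnCA -expnD.
have g3 : s ^ 10 * s.+1 ^ 3 <= 2 ^ 3 * s ^ 14.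
  have : s.+1 ^ 3 <= (2 * s) ^ 3 by rewrite leq_exp2r.
  rewrite expnMn => h; apply: leq_trans (leq_mul (leqnn _) h) _.
  rewrite mulnCA -expnD leq_mul2l; apply/orP; right.
  by rewrite leq_pexp2l.
have e1 : s.+1 ^ 3 * (s.+1 ^ 6 + 2 * s ^ 5) ^ 2 =
          s.+1 ^ 15 + 4 * (s ^ 5 * s.+1 ^ 9) + 4 * (s ^ 10 * s.+1 ^ 3).
  have -> : s.+1 ^ 15 = s.+1 ^ 3 * s.+1 ^ 6 * s.+1 ^ 6 by rewrite -!expnD.
  have -> : s.+1 ^ 9 = s.+1 ^ 3 * s.+1 ^ 6 by rewrite -!expnD.
  have -> : s ^ 10 = s ^ 5 * s ^ 5 by rewrite -!expnD.
  set Q3 := s.+1 ^ 3; set Q6 := s.+1 ^ 6; set S5 := s ^ 5. clear; nia.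
have e2 : (2 * s ^ 5) ^ 2 * (s ^ 5 + 2 ^ 16 * s ^ 4) =
          4 * s ^ 15 + 4 * 2 ^ 16 * s ^ 14.
  have -> : s ^ 15 = s ^ 5 * s ^ 5 * s ^ 5 by rewrite -!expnD.
  have -> : s ^ 14 = s ^ 5 * s ^ 5 * s ^ 4 by rewrite -!expnD.
  set S4 := s ^ 4; set S5 := s ^ 5; set P := 2 ^ 16. clear; nia.
rewrite -mulnA e1 e2.
move: f1 g2 g3.
set A := s.+1 ^ 15; set B := s ^ 15; set C := s ^ 14; set X := s ^ 5 * _; set Y := s ^ 10 * _.
have -> : 2 ^ 16 = 2 * 2 ^ 14.+1 by rewrite -expnS.
have -> : 2 ^ 14.+1 = 64 * 2 ^ 9 by rewrite -(expnD 2 6 9).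
have -> : 2 ^ 3 = 8 by [].
set P := 2 ^ 9.
clear; lia.
Qed.

Definition aa D := 2 * cbrt D ^ 5.
Definition KK D := (2 * D * (D ^ 2 + aa D) ^ 2) %/ (aa D ^ 2) + 1.
Definition kD D := D ^ 2 + aa D + KK D.

Lemma aa_pos D : 0 < D -> 0 < aa D.
Proof. by move=> D0; rewrite /aa muln_gt0 expn_gt0 cbrt_pos. Qed.

Lemma KK_ok D : 0 < D -> 2 * D * (D ^ 2 + aa D) ^ 2 <= KK D * aa D ^ 2.
Proof.
move=> D0; rewrite /KK addn1; apply: ltnW; apply: ltn_ceil.
by rewrite expn_gt0 aa_pos.
Qed.

Lemma kD_bound D : 0 < D ->
  2 * kD D <= 2 * D ^ 2 + 5 * cbrt D ^ 5 + 2 ^ 16 * cbrt D ^ 4 + 2.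
Proof.
move=> D0.
have s0 := cbrt_pos D0.
have pb := poly_bound s0 (cbrt_gt D).
have tr := leq_trunc_div (2 * D * (D ^ 2 + aa D) ^ 2) (aa D ^ 2).
have a2 : 0 < aa D ^ 2 by rewrite expn_gt0 aa_pos.
have H : 2 * KK D <= cbrt D ^ 5 + 2 ^ 16 * cbrt D ^ 4 + 2.
  rewrite -(leq_pmul2r a2).
  move: pb tr; rewrite /KK -/(aa D).
  set x := 2 * D * _; set q := x %/ _; set A2 := aa D ^ 2.
  have -> : 4 * D * (D ^ 2 + aa D) ^ 2 = 2 * x by rewrite /x !mulnA.
  set P := cbrt D ^ 5 + _.
  clear; nia.
rewrite /kD /aa; move: H; set s5 := cbrt D ^ 5; set s4 := cbrt D ^ 4.
clear; lia.
Qed.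


Lemma INR_addn m n : INR (m + n) = (INR m + INR n)%R.
Proof. exact: plus_INR. Qed.
Lemma INR_muln m n : INR (m * n) = (INR m * INR n)%R.
Proof. exact: mult_INR. Qed.
Lemma INR_expn m n : INR (m ^ n) = (INR m ^ n)%R.
Proof.
elim: n => [|n IH]; first by rewrite expn0.
by rewrite expnS INR_muln IH.
Qed.
Lemma INR_leq m n : m <= n -> (INR m <= INR n)%R.
Proof. by move/leP; apply: le_INR. Qed.

Open Scope R_scope.

Lemma Rpower_pos x y : 0 < Rpower x y.
Proof. by rewrite /Rpower; apply: exp_pos. Qed.

Lemma Rpower_cube (S : R) (n : nat) : 0 < S ->
  Rpower (S ^ 3) (INR n / 3) = S ^ n.
Proof.
move=> S0.
rewrite -(@Rpower_pow 3 S S0) Rpower_mult -(@Rpower_pow n S S0).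
congr (Rpower S _); rewrite (_ : INR 3 = 3); last by simpl; lra.
field.
Qed.

Lemma pow_le_Rpower (S d : R) (n : nat) : 0 < S -> S ^ 3 <= d ->
  S ^ n <= Rpower d (INR n / 3).
Proof.
move=> S0 Sd.
rewrite -Rpower_cube //; apply: Rle_Rpower_l.
  apply: Rmult_le_pos; [exact: pos_INR | lra].
split => //; exact: pow_lt.
Qed.

Lemma p_ge : 5 / 2 <= Rpower 2 (4 / 3).
Proof.
set p := Rpower 2 (4 / 3).
have p0 : 0 < p by apply: Rpower_pos.
have p3 : p ^ 3 = 16.
  rewrite /p -Rpower_pow // Rpower_mult.
  rewrite (_ : 4 / 3 * INR 3 = INR 4); last by simpl; field.
  rewrite Rpower_pow; [simpl; lra | lra].
simpl in p3; nra.
Qed.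

Lemma conv (k d s5 s4 c two five : nat) :
  (two * k <= two * d ^ 2 + five * s5 + c * s4 + two)%N ->
  INR two * INR k <= INR two * INR d ^ 2 + INR five * INR s5 + INR c * INR s4 + INR two.
Proof.
move/INR_leq; rewrite !INR_addn !INR_muln => h.
have -> : INR d ^ 2 = INR d * INR d by ring.
exact: h.
Qed.

Lemma kD_R (D : nat) : (0 < D)%N ->
  INR (kD D) <= INR D ^ 2 + Rpower 2 (4/3) * Rpower (INR D) (5/3)
                + (2 ^ 16 / 2 + 1) * Rpower (INR D) (4/3).
Proof.
move=> D0.
have H := conv (kD_bound D0).
rewrite !INR_expn in H.
set S := INR (cbrt D) in H.
rewrite (_ : INR 2 = 2) in H; last by simpl; lra.
rewrite (_ : INR 5 = 5) in H; last by simpl; lra.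
have S1 : 1 <= S by rewrite /S -/(INR 1); apply: INR_leq; apply: cbrt_pos.
have S3 : S ^ 3 <= INR D by rewrite /S -INR_expn; apply: INR_leq; apply: cb_le.
have S0 : 0 < S by lra.
have h5 := pow_le_Rpower 5 S0 S3.
have h4 := pow_le_Rpower 4 S0 S3.
rewrite (_ : INR 5 / 3 = 5 / 3) in h5; last by simpl; field.
rewrite (_ : INR 4 / 3 = 4 / 3) in h4; last by simpl; field.
have d1 : 1 <= INR D by rewrite -/(INR 1); apply: INR_leq.
have h1 : 1 <= Rpower (INR D) (4/3).
  have : Rpower 1 (4/3) <= Rpower (INR D) (4/3) by apply: Rle_Rpower_l; lra.
  by rewrite /Rpower ln_1 Rmult_0_r exp_0.
have pg := p_ge.
set x5 := Rpower (INR D) (5/3) in h5 *.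
set x4 := Rpower (INR D) (4/3) in h4 h1 *.
set p := Rpower 2 (4/3) in pg *.
set c := 2 ^ 16 in H *.
have c0 : 0 <= c by apply: pow_le; lra.
have S5 : 0 <= S ^ 5 by apply: pow_le; lra.
have S4 : 0 <= S ^ 4 by apply: pow_le; lra.
have hp : 5 / 2 * S ^ 5 <= p * x5 by nra.
have hc : c * S ^ 4 <= c * x4 by nra.
lra.
Qed.

Close Scope R_scope.

Theorem theorem6 :
  exists f : nat -> R, bigO_4_3 f /\
    forall (T : finType) (e : rel T), simple_graph e ->
      (3 <= maxdeg e)%N ->
      thue_choice_index_le e
        (INR (maxdeg e) ^ 2 + Rpower 2 (4/3) * Rpower (INR (maxdeg e)) (5/3)
         + f (maxdeg e))%R.
Proof.
exists (fun D => Rmax 0 (INR (kD D) - (INR D ^ 2 + Rpower 2 (4/3) * Rpower (INR D) (5/3))))%R.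
split.
  exists (2 ^ 16 / 2 + 1)%R, 1%N => D D1.
  have h := kD_R D1.
  have x0 := Rpower_pos (INR D) (4/3).
  have c0 : (0 <= 2 ^ 16)%R by apply: pow_le; lra.
  move: h x0 c0; set c := (2 ^ 16)%R; set x := Rpower (INR D) (4/3) => h x0 c0.
  have cx : (0 <= (c / 2 + 1) * x)%R by nra.
  rewrite Rabs_pos_eq; last by apply: Rmax_l.
  rewrite /Rmax; case: Rle_dec => _; lra.
move=> T e sg D3.
have D0 : (0 < maxdeg e)%N by apply: leq_trans D3.
exists (kD (maxdeg e)); split.
  exact: (choosable sg (aa_pos D0) (KK_ok D0)).
have := Rmax_r 0 (INR (kD (maxdeg e)) - (INR (maxdeg e) ^ 2
   + Rpower 2 (4 / 3) * Rpower (INR (maxdeg e)) (5 / 3)))%R.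
lra.
Qed.
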